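(* Let $p$ be an odd prime. For all $x\in\mathbb C_p$ with $|x|_p>1$: (1) $G_{p,E}(1-x)+G_{p,E}(x)=0$; (2) $G_{p,E}(x)-G_{p,E}(-x)=2x(\log_p(x)-1)$; (3) $G_{p,E}(1+x)+G_{p,E}(x)=2x(\log_p(x)-1)$.
   Context: $|\cdot|_p$ is the absolute value on $\mathbb C_p$ with $|p|_p=p^{-1}$, and $\log_p$ is Iwasawa's $p$-adic logarithm. For $x\in\mathbb C_p$ with $|x|_p>1$, $G_{p,E}(x)=\lim_{N\to\infty}\sum_{a=0}^{p^N-1}\{(x+a)\log_p(x+a)-(x+a)\}(-1)^a$. *)

(* Defs.v *)
(* C_p is given axiomatically (characterised up to isometric
   isomorphism). *)
From HB Require Import structures.
From mathcomp Require Import all_boot all_order all_algebra.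
From mathcomp Require Import reals.
From Stdlib Require Import ClassicalEpsilon.
Set Implicit Arguments. Unset Strict Implicit. Unset Printing Implicit Defensive.
Import Order.TTheory GRing.Theory Num.Theory.
Local Open Scope ring_scope.

Section Padic.
Variables (R : realType) (K : closedFieldType) (v : K -> R).

Definition nonarch_abs : Prop :=
  (forall x, 0 <= v x) /\ (forall x, v x = 0 <-> x = 0) /\
  (forall x y, v (x * y) = v x * v y) /\
  (forall x y, v (x + y) <= Num.max (v x) (v y)).

Definition cvgK (u : nat -> K) (l : K) : Prop :=
  forall e : R, 0 < e -> exists N, forall n, (N <= n)%N -> v (u n - l) < e.

Definition cauchyK (u : nat -> K) : Prop :=
  forall e : R, 0 < e -> exists N, forall m n, (N <= m)%N -> (N <= n)%N ->
    v (u m - u n) < e.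

Definition limK (u : nat -> K) : K := epsilon (inhabits 0) (fun l => cvgK u l).

(* (K, v) is (isometrically isomorphic to) C_p : an algebraically closed
   (K : closedFieldType), characteristic 0, complete non-archimedean valued
   field with |p| = p^-1, in which the elements algebraic over Q are dense. *)
Definition is_Cp (p : nat) : Prop :=
  nonarch_abs /\
  (forall n : nat, (0 < n)%N -> n%:R != 0 :> K) /\
  v p%:R = (p%:R)^-1 /\
  (forall u, cauchyK u -> exists l, cvgK u l) /\
  (forall (x : K) (e : R), 0 < e -> exists (y : K) (q : {poly rat}),
      q != 0 /\ root (map_poly ratr q) y /\ v (x - y) < e).

Definition iwasawa_log (p : nat) (lg : K -> K) : Prop :=
  (forall x y, x != 0 -> y != 0 -> lg (x * y) = lg x + lg y) /\
  lg p%:R = 0 /\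
  (forall x, v (x - 1) < 1 ->
     cvgK (fun N => \sum_(1 <= n < N) (-1) ^+ n.+1 * (x - 1) ^+ n / n%:R) (lg x)).

Definition GpE (p : nat) (lg : K -> K) (x : K) : K :=
  limK (fun N => \sum_(0 <= a < p ^ N)
          ((x + a%:R) * lg (x + a%:R) - (x + a%:R)) * (-1) ^+ a).

End Padic.

(* Main.v *)
Require Import Defs.
From HB Require Import structures.
From mathcomp Require Import all_boot all_order all_algebra.
From mathcomp Require Import reals.
From mathcomp Require Import ring lra zify.
From Stdlib Require Import ClassicalEpsilon.
Set Implicit Arguments. Unset Strict Implicit. Unset Printing Implicit Defensive.
Import Order.TTheory GRing.Theory Num.Theory.
Local Open Scope ring_scope.

Section Basic.
Context (R : realType) (K : closedFieldType) (v : K -> R).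
Context (hv : nonarch_abs v).

Lemma v_ge0 x : 0 <= v x. Proof. by case: hv. Qed.
Lemma v_eq0 x : v x = 0 <-> x = 0. Proof. by case: hv => _ []. Qed.
Lemma vM x y : v (x * y) = v x * v y. Proof. by case: hv => _ [_ []]. Qed.
Lemma vD x y : v (x + y) <= Num.max (v x) (v y). Proof. by case: hv => _ [_ [_]]. Qed.
Lemma v0 : v 0 = 0. Proof. by apply/v_eq0. Qed.
Lemma v1 : v 1 = 1.
Proof.
have h := vM 1 1; rewrite mulr1 in h.
have n0 : v 1 != 0 by apply/eqP => /v_eq0/eqP; rewrite oner_eq0.
by apply: (mulfI n0); rewrite mulr1 -h.
Qed.
Lemma vN1 : v (-1) = 1.
Proof.
have h := vM (-1) (-1); rewrite mulrNN mulr1 v1 in h.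
have h0 := v_ge0 (-1).
have : (v (-1) - 1) * (v (-1) + 1) = 0 by rewrite mulrDr !mulrBl -h; ring.
move/eqP; rewrite mulf_eq0 => /orP[]; rewrite ?subr_eq0 => /eqP // h1. lra.
Qed.
Lemma vN x : v (- x) = v x.
Proof. by rewrite -mulN1r vM vN1 mul1r. Qed.
Lemma vB x y : v (x - y) <= Num.max (v x) (v y).
Proof. by rewrite -(vN y) vD. Qed.
Lemma vD_le x y b : v x <= b -> v y <= b -> v (x + y) <= b.
Proof. move=> h1 h2; apply: le_trans (vD x y) _; by rewrite ge_max h1 h2. Qed.
Lemma vB_le x y b : v x <= b -> v y <= b -> v (x - y) <= b.
Proof. move=> h1 h2; apply: vD_le => //; by rewrite vN. Qed.
Lemma vX x n : v (x ^+ n) = v x ^+ n.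
Proof. elim: n => [|n IH]; by rewrite ?expr0 ?v1 // !exprS vM IH. Qed.
Lemma vV x : v (x^-1) = (v x)^-1.
Proof.
have [->|nx] := eqVneq x 0; first by rewrite invr0 v0 invr0.
have h := vM x x^-1; rewrite mulfV // v1 in h.
have hx : v x != 0 by apply/eqP => /v_eq0/eqP; rewrite (negbTE nx).
by rewrite -[RHS]mulr1 h mulKf.
Qed.
Lemma vsign n : v ((-1) ^+ n) = 1.
Proof. by rewrite vX vN1 expr1n. Qed.
Lemma vnat_le1 n : v n%:R <= 1.
Proof.
elim: n => [|n IH]; first by rewrite v0.
rewrite -addn1 natrD; apply: vD_le => //; by rewrite v1.
Qed.
Lemma vsum_le (I : Type) (r : seq I) (P : pred I) (F : I -> K) b :
  0 <= b -> (forall i, P i -> v (F i) <= b) -> v (\sum_(i <- r | P i) F i) <= b.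
Proof.
move=> b0 h; elim/big_rec: _ => [|i y Pi hy]; first by rewrite v0.
exact: vD_le (h _ Pi) hy.
Qed.
Lemma vD_eq x y : v y < v x -> v (x + y) = v x.
Proof.
move=> h; apply/eqP; rewrite eq_le; apply/andP; split.
  apply: le_trans (vD x y) _; rewrite ge_max lexx; exact: ltW.
have := vB (x + y) y; rewrite addrK => h2.
rewrite leNgt; apply/negP => h3.
have : Num.max (v (x + y)) (v y) < v x by rewrite gt_max h3 h.
by rewrite ltNge h2.
Qed.

End Basic.
Section Cvg.
Context (R : realType) (K : closedFieldType) (v : K -> R).
Context (hv : nonarch_abs v).

Lemma v_le0 x : v x <= 0 -> x = 0.
Proof. move=> h; apply/(v_eq0 hv)/eqP; rewrite eq_le h v_ge0 //. Qed.

Lemma le_eps (a b : R) : 0 <= b -> (forall e, 0 < e -> a <= Num.max e b) -> a <= b.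
Proof.
move=> b0 h; rewrite leNgt; apply/negP => hab.
have := h (a / 2) ltac:(lra); rewrite le_max => /orP[]; lra.
Qed.

Lemma cvg_uniq u a b : cvgK v u a -> cvgK v u b -> a = b.
Proof.
move=> ha hb; apply/eqP; rewrite -subr_eq0; apply/eqP/v_le0.
apply: le_eps => // e e0.
have [N1 h1] := ha e e0; have [N2 h2] := hb e e0.
have := h1 (maxn N1 N2) (leq_maxl _ _); have := h2 (maxn N1 N2) (leq_maxr _ _).
move=> e2 e1.
have -> : a - b = (u (maxn N1 N2) - b) - (u (maxn N1 N2) - a) by ring.
apply: le_trans (vB hv _ _) _; rewrite ge_max !le_max (ltW e2) (ltW e1) //.
Qed.

Lemma limK_eq u a : cvgK v u a -> limK v u = a.
Proof.
move=> h; apply: (cvg_uniq _ h); rewrite /limK.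
apply: (epsilon_spec (inhabits 0) (fun l => cvgK v u l)); by exists a.
Qed.

Lemma cvgD u w a b : cvgK v u a -> cvgK v w b -> cvgK v (fun n => u n + w n) (a + b).
Proof.
move=> ha hb e e0; have [N1 h1] := ha e e0; have [N2 h2] := hb e e0.
exists (maxn N1 N2) => n hn.
have -> : u n + w n - (a + b) = (u n - a) + (w n - b) by ring.
apply: le_lt_trans (vD hv _ _) _; rewrite gt_max h1 ?h2 //.
  exact: leq_trans (leq_maxr _ _) hn.
exact: leq_trans (leq_maxl _ _) hn.
Qed.

Lemma cvgN u a : cvgK v u a -> cvgK v (fun n => - u n) (- a).
Proof.
move=> ha e e0; have [N h] := ha e e0; exists N => n hn.
by rewrite -opprD vN // h.
Qed.

Lemma cvg_close u w a : cvgK v u a ->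
  (forall e, 0 < e -> exists N, forall n, (N <= n)%N -> v (w n - u n) < e) ->
  cvgK v w a.
Proof.
move=> ha hc e e0; have [N1 h1] := ha e e0; have [N2 h2] := hc e e0.
exists (maxn N1 N2) => n hn.
have -> : w n - a = (w n - u n) + (u n - a) by ring.
apply: le_lt_trans (vD hv _ _) _; rewrite gt_max h1 ?h2 //.
  exact: leq_trans (leq_maxr _ _) hn.
exact: leq_trans (leq_maxl _ _) hn.
Qed.

Lemma cvg_ext u w a : cvgK v u a -> (forall n, u n = w n) -> cvgK v w a.
Proof. move=> h e n e0; have [N hN] := h n e0; exists N => m hm; rewrite -e; exact: hN. Qed.

Lemma bound_lim u L c B : 0 <= B -> cvgK v u L ->
  (exists N0, forall N, (N0 <= N)%N -> v (u N - c) <= B) -> v (L - c) <= B.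
Proof.
move=> B0 hL [N0 hB]; apply: le_eps => // e e0.
have [N1 h1] := hL e e0.
have -> : L - c = (u (maxn N0 N1) - c) - (u (maxn N0 N1) - L) by ring.
apply: le_trans (vB hv _ _) _.
have := hB (maxn N0 N1) (leq_maxl _ _); have := h1 (maxn N0 N1) (leq_maxr _ _).
move=> e1 e2.
by rewrite ge_max !le_max e2 (ltW e1) !orbT.
Qed.

End Cvg.
Section Padic.
Context (R : realType) (K : closedFieldType) (v : K -> R) (p : nat).
Context (hp : prime p) (hodd : odd p) (hC : is_Cp v p).

Let hv : nonarch_abs v. Proof. by case: hC. Qed.
Let char0 n : (0 < n)%N -> n%:R != 0 :> K. Proof. by case: hC => _ [h _]; apply: h. Qed.
Let vp : v p%:R = (p%:R)^-1. Proof. by case: hC => _ [_ [h _]]. Qed.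

Lemma p_ge3 : (3 <= p)%N.
Proof.
have := prime_gt1 hp; case: p hodd => [|[|[|]]] //.
Qed.

Lemma pR_gt1 : 1 < p%:R :> R.
Proof. have := p_ge3; rewrite -(ler_nat R) => h; apply: lt_le_trans h; by rewrite ltr1n. Qed.

Lemma vp_lt1 : v p%:R < 1.
Proof. rewrite vp invf_lt1 ?pR_gt1 //; apply: lt_trans pR_gt1; done. Qed.

Lemma v_coprime m : ~~ (p %| m)%N -> v m%:R = 1.
Proof.
move=> hm.
have m0 : (0 < m)%N by case: m hm => //; rewrite dvdn0.
have cop : coprime m p by rewrite coprime_sym prime_coprime.
case: (egcdnP p m0) => km kn + _; rewrite (eqP cop) => e.
have eK : 1 = km%:R * m%:R - kn%:R * p%:R :> K.
  by rewrite -!natrM e natrD; ring.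
apply/eqP; rewrite eq_le (vnat_le1 hv) //=.
have := vB hv (km%:R * m%:R) (kn%:R * p%:R); rewrite -eK (v1 hv) !(vM hv).
have := vnat_le1 hv km; have := vnat_le1 hv kn; have := vp_lt1.
have := v_ge0 hv km%:R; have := v_ge0 hv kn%:R; have := v_ge0 hv m%:R; have := v_ge0 hv p%:R.
move=> a1 a2 a3 a4 a5 a6 a7 a8; rewrite le_max in a8; case/orP: a8 => a8; nra.
Qed.

Lemma v_nat_ge n : (0 < n)%N -> 1 <= n%:R * v n%:R.
Proof.
elim: n {-2}n (leqnn n) => [|N IH] n hn n0; first by case: n hn n0.
case hd: (p %| n)%N; last first.
  by rewrite v_coprime ?hd // mulr1 ler1n.
move/dvdnP: hd => [k nk]; subst n.
have k0 : (0 < k)%N by rewrite lt0n; apply/eqP => k0; move: n0; rewrite k0 mul0n.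
have kN : (k <= N)%N.
  rewrite -ltnS; apply: leq_trans hn; have := prime_gt1 hp.
  case: p => [|[|q]] // _; rewrite mulnS; lia.
have := IH k kN k0.
rewrite !natrM (vM hv) vp.
have hp0 : p%:R != 0 :> R by rewrite pnatr_eq0; case: p hp.
by rewrite mulrACA mulfV // mulr1.
Qed.

Lemma vinv_nat n : (0 < n)%N -> (v n%:R)^-1 <= n%:R.
Proof.
move=> n0; have h := v_nat_ge n0.
have vn0 : v n%:R != 0 by apply/eqP => e; rewrite e mulr0 in h; lra.
have hw : (v n%:R)^-1 * v n%:R = 1 by rewrite mulVf.
have := v_ge0 hv n%:R; have : 0 <= (v n%:R)^-1 by rewrite invr_ge0 (v_ge0 hv).
nra.
Qed.

Lemma vterm t n : (0 < n)%N ->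
  v ((-1) ^+ n.+1 * t ^+ n / n%:R) <= v t ^+ n * n%:R.
Proof.
move=> n0; rewrite !(vM hv) (vV hv) (vsign hv) (vX hv) mul1r.
apply: ler_wpM2l; first by rewrite exprn_ge0 // (v_ge0 hv).
exact: vinv_nat.
Qed.


Lemma bernoulli (V : R) n : 1 <= V -> 1 + n%:R * (V - 1) <= V ^+ n.
Proof.
move=> V1; elim: n => [|n IH]; first by rewrite mul0r addr0 expr0.
rewrite exprS -natr1.
have n0 : 0 <= n%:R :> R by [].
have h1 : 0 <= V * (V ^+ n - (1 + n%:R * (V - 1))) by apply: mulr_ge0; lra.
have h2 : 0 <= n%:R * ((V - 1) * (V - 1)) by apply: mulr_ge0 => //; apply: mulr_ge0; lra.
nra.
Qed.

Lemma rn_bound (V : R) n : 1 < V -> (V^-1) ^+ n * n%:R <= (V - 1)^-1.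
Proof.
move=> V1; have Vn : 0 < V ^+ n by apply: exprn_gt0; lra.
rewrite exprVn mulrC ler_pdivrMr // mulrC ler_pdivlMr; last by lra.
have := bernoulli n (ltW V1); lra.
Qed.

Lemma wn_bound (w : R) k : 0 <= w -> w <= 2^-1 -> w ^+ k * (k.+2)%:R <= 2.
Proof.
move=> w0 w1; elim: k => [|k IH]; first by rewrite expr0 mul1r.
have h0 : 0 <= w ^+ k by apply: exprn_ge0.
have h1 : w ^+ k <= 1 by apply: exprn_ile1; lra.
rewrite exprS -[(k.+3)%:R]natr1 -[(k.+2)%:R]natr1 in IH *.
have : 0 <= k%:R :> R by [].
nra.
Qed.

Variable (lg : K -> K) (hlg : iwasawa_log v p lg).

Lemma lgM x y : x != 0 -> y != 0 -> lg (x * y) = lg x + lg y.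
Proof. by case: hlg => h _; apply: h. Qed.

Lemma lg1 : lg 1 = 0.
Proof.
have := lgM (oner_neq0 K) (oner_neq0 K); rewrite mulr1 => h.
by apply: (addrI (lg 1)); rewrite addr0 -h.
Qed.

Lemma lgN1 : lg (-1) = 0.
Proof.
have n1 : (-1 : K) != 0 by rewrite oppr_eq0 oner_neq0.
have := lgM n1 n1; rewrite mulrNN mulr1 lg1 => /esym/eqP.
rewrite -mulr2n -mulr_natr mulf_eq0 => /orP[/eqP //|].
by rewrite (negbTE (char0 (isT : (0 < 2)%N))).
Qed.

Lemma lg_opp x : lg (- x) = lg x.
Proof.
have [->|nx] := eqVneq x 0; first by rewrite oppr0.
have n1 : (-1 : K) != 0 by rewrite oppr_eq0 oner_neq0.
by rewrite -mulN1r lgM // lgN1 add0r.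
Qed.

Lemma vsum_le_mem (I : eqType) (r : seq I) (F : I -> K) b :
  0 <= b -> (forall i, i \in r -> v (F i) <= b) -> v (\sum_(i <- r) F i) <= b.
Proof.
move=> b0; elim: r => [|i r IH] h; first by rewrite big_nil (v0 hv).
rewrite big_cons; apply: (vD_le hv); first by apply: h; rewrite mem_head.
by apply: IH => j hj; apply: h; rewrite in_cons hj orbT.
Qed.

Lemma vterm' t n : v ((-1) ^+ n.+1 * t ^+ n / n%:R) <= v t ^+ n * n%:R.
Proof.
case: n => [|n]; last exact: vterm.
by rewrite invr0 mulr0 (v0 hv) mulr0.
Qed.

Definition lser (t : K) := fun N => \sum_(1 <= n < N) (-1) ^+ n.+1 * t ^+ n / n%:R.

Lemma lg_series t : v t < 1 -> cvgK v (lser t) (lg (1 + t)).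
Proof.
move=> ht; case: hlg => _ [_ h].
have := h (1 + t); rewrite addrAC subrr add0r => /(_ ht) hc.
exact: cvg_ext hc (fun _ => erefl).
Qed.

Lemma lg_bound_big (V : R) t : 1 < V -> v t <= V^-1 -> v (lg (1 + t)) <= (V - 1)^-1.
Proof.
move=> V1 ht.
have Vi1 : V^-1 < 1 by rewrite invf_lt1 //; lra.
have hB : 0 <= (V - 1)^-1 by rewrite invr_ge0; lra.
have := @bound_lim _ _ _ hv (lser t) (lg (1 + t)) 0 _ hB (lg_series (le_lt_trans ht Vi1)).
rewrite subr0; apply; exists 0%N => N _; rewrite subr0.
apply: vsum_le_mem => // n _.
apply: le_trans (vterm' _ _) _; apply: le_trans (rn_bound n V1).
apply: ler_wpM2r => //; apply: lerXn2r => //; rewrite ?nnegrE ?(v_ge0 hv) //.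
by rewrite invr_ge0; lra.
Qed.

Lemma lg_small s : v s <= 2^-1 -> v (lg (1 + s) - s) <= v s ^+ 2 * 2.
Proof.
move=> hs.
have s0 := v_ge0 hv s.
have hB : 0 <= v s ^+ 2 * 2 by apply: mulr_ge0 => //; apply: exprn_ge0.
apply: (@bound_lim _ _ _ hv (lser s)) => //; first by apply: lg_series; lra.
exists 2%N => N hN; rewrite /lser big_ltn //= expr1 divr1 expr2 mulrNN mulr1 mul1r.
rewrite addrC addKr.
apply: vsum_le_mem => // n; rewrite mem_index_iota => /andP[n2 _].
apply: le_trans (vterm' _ _) _.
case: n n2 => [|[|k]] // _.
rewrite -[in v s ^+ _]addn2 exprD mulrAC [_ * 2]mulrC.
by rewrite ler_wpM2r ?exprn_ge0 // wn_bound.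
Qed.

Lemma lg_small2 s : v s <= 2^-1 -> v (lg (1 + s)) <= v s.
Proof.
move=> hs; have s0 := v_ge0 hv s.
have -> : lg (1 + s) = (lg (1 + s) - s) + s by ring.
apply: (vD_le hv) => //; apply: le_trans (lg_small hs) _.
rewrite expr2; nra.
Qed.

Variables (x : K) (hx : 1 < v x).

Definition f (y : K) := y * lg y - y.
Definition S (N : nat) (y : K) := \sum_(0 <= a < p ^ N) f (y + a%:R) * (-1) ^+ a.
Definition inY (z : K) := v (z - x) <= 1 \/ v (z + x) <= 1.
Definition eps (N : nat) : R := (p%:R^-1) ^+ N.
Definition Cl : R := Num.max (v (lg x)) ((v x - 1)^-1).
Definition C : R := Num.max 1 Cl.

Lemma pinv_ge0 : 0 <= (p%:R : R)^-1.
Proof. by rewrite invr_ge0. Qed.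
Lemma pinv_le : (p%:R : R)^-1 <= 2^-1.
Proof.
rewrite lef_pV2 ?posrE //; last by apply: lt_trans pR_gt1.
have := p_ge3; rewrite -(ler_nat R); apply: le_trans; by rewrite ler_nat.
Qed.
Lemma eps_ge0 N : 0 <= eps N. Proof. exact: exprn_ge0 pinv_ge0. Qed.
Lemma eps_mono N m : (N <= m)%N -> eps m <= eps N.
Proof. move=> h; apply: ler_wiXn2l => //; [exact: pinv_ge0|have := pinv_le; lra]. Qed.
Lemma eps_le N : (1 <= N)%N -> eps N <= 2^-1.
Proof. move=> h; apply: le_trans (eps_mono h) _; rewrite /eps expr1; exact: pinv_le. Qed.
Lemma v_pN N : v (p ^ N)%:R = eps N.
Proof. by rewrite natrX (vX hv) vp. Qed.
Lemma C_ge1 : 1 <= C. Proof. by rewrite /C le_max lexx. Qed.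
Lemma Cl_le_C : Cl <= C. Proof. by rewrite /C le_max lexx orbT. Qed.

Lemma inY_v z : inY z -> v z = v x.
Proof.
case=> h.
  have -> : z = x + (z - x) by ring.
  by apply: (vD_eq hv); apply: le_lt_trans h hx.
have -> : z = - x + (z + x) by ring.
have vnx : v (- x) = v x by apply: vN.
rewrite (vD_eq hv) vnx //; exact: le_lt_trans h hx.
Qed.

Lemma inY_add z c : inY z -> v c <= 1 -> inY (z + c).
Proof.
move=> [h|h] hc; [left|right].
  have -> : z + c - x = (z - x) + c by ring. exact: vD_le.
have -> : z + c + x = (z + x) + c by ring. exact: vD_le.
Qed.

Lemma x_neq0 : x != 0.
Proof. apply/eqP => e; move: hx; rewrite e (v0 hv); lra. Qed.

Lemma v_neq0 z : 0 < v z -> z != 0.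
Proof. by move=> h; apply/eqP => e; move: h; rewrite e (v0 hv) ltxx. Qed.

Lemma one_plus_neq0 t : v t < 1 -> 1 + t != 0.
Proof.
move=> h; apply: v_neq0; rewrite (vD_eq hv) ?(v1 hv) //.
Qed.

Lemma lgY_aux w c : v w = v x -> lg w = lg x -> v c <= 1 -> v (lg (w + c)) <= Cl.
Proof.
move=> hw hl hc.
have w0 : w != 0 by apply: v_neq0; rewrite hw; apply: lt_trans hx.
have vt : v (c / w) <= (v x)^-1.
  rewrite (vM hv) (vV hv) hw; rewrite -[X in _ <= X]mul1r; apply: ler_wpM2r => //.
  by rewrite invr_ge0 (v_ge0 hv).
have Vi1 : (v x)^-1 < 1 by rewrite invf_lt1 // (lt_trans ltr01 hx).
have -> : w + c = w * (1 + c / w) by rewrite mulrDr mulr1 mulrCA divff // mulr1.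
rewrite lgM // ?one_plus_neq0 //; last exact: le_lt_trans vt Vi1.
apply: (vD_le hv); first by rewrite hl /Cl le_max lexx.
apply: le_trans (lg_bound_big hx vt) _; by rewrite /Cl le_max lexx orbT.
Qed.

Lemma lgY z : inY z -> v (lg z) <= Cl.
Proof.
case=> h.
  have -> : z = x + (z - x) by ring. exact: lgY_aux.
have -> : z = - x + (z + x) by ring.
apply: lgY_aux => //; [exact: vN | exact: lg_opp].
Qed.

Lemma hx1 : 1 < v x. Proof. exact: hx. Qed.

Lemma term_est N z h : (1 <= N)%N -> inY z -> v h <= eps N ->
  v (f (z + h) - f z) <= C * eps N.
Proof.
move=> N1 hz hh.
have Vx := hx1.
have vz := inY_v hz.
have z0 : z != 0 by apply: v_neq0; rewrite vz; lra.
set s := h / z.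
have hs : h = z * s by rewrite /s mulrCA divff // mulr1.
have vs : v h = v x * v s by rewrite hs (vM hv) vz.
have s0 := v_ge0 hv s.
have e0 := eps_ge0 N.
have e2 := eps_le N1.
have vs_le : v s <= eps N by nra.
have vs2 : v s <= 2^-1 by lra.
have s1 : 1 + s != 0 by apply: one_plus_neq0; lra.
have hzh : z + h = z * (1 + s) by rewrite hs mulrDr mulr1.
have -> : f (z + h) - f z = h * lg z + z * ((lg (1 + s) - s) + s * lg (1 + s)).
  rewrite /f hzh lgM // -hzh hs; ring.
have hCl := Cl_le_C; have hC1 := C_ge1.
apply: (vD_le hv).
  rewrite (vM hv); have := lgY hz; have := v_ge0 hv (lg z); have := v_ge0 hv h; nra.
rewrite (vM hv) vz.
have b1 : v (lg (1 + s) - s + s * lg (1 + s)) <= v s ^+ 2 * 2.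
  apply: (vD_le hv); first exact: lg_small.
  rewrite (vM hv) expr2; have := lg_small2 vs2; have := v_ge0 hv (lg (1 + s)); nra.
have := v_ge0 hv (lg (1 + s) - s + s * lg (1 + s)).
move: b1; rewrite expr2 => b1 b0.
nra.
Qed.

Lemma L1 N y h : (1 <= N)%N -> inY y -> v h <= eps N ->
  v (S N (y + h) - S N y) <= C * eps N.
Proof.
move=> N1 hy hh.
have hC0 : 0 <= C * eps N by apply: mulr_ge0; [have := C_ge1; lra|exact: eps_ge0].
rewrite /S -sumrB; apply: vsum_le_mem => // a _.
rewrite -mulrBl (vM hv) (vsign hv) mulr1.
have -> : y + h + a%:R = (y + a%:R) + h by ring.
apply: term_est => //; apply: inY_add => //; exact: vnat_le1.
Qed.

Lemma sum_split (F : nat -> K) M k :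
  \sum_(0 <= a < M * k) F a = \sum_(0 <= j < k) \sum_(0 <= b < M) F (j * M + b)%N.
Proof.
elim: k => [|k IH]; first by rewrite muln0 !big_geq.
rewrite mulnSr (big_cat_nat (n := (M * k)%N)) //; last exact: leq_addr.
rewrite IH big_nat_recr //=; congr (_ + _).
rewrite -{1}(add0n (M * k)%N) big_addn addKn; apply: eq_big_nat => i _.
by rewrite addnC mulnC.
Qed.

Lemma sum_sign n : \sum_(0 <= j < n) (-1) ^+ j = (odd n)%:R :> K.
Proof.
elim: n => [|n IH]; first by rewrite big_geq.
rewrite big_nat_recr //= IH -signr_odd; case: (odd n) => /=; rewrite ?expr0 ?expr1; ring.
Qed.

Lemma sign_pN N j : (-1) ^+ (j * p ^ N)%N = (-1) ^+ j :> K.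
Proof.
by rewrite mulnC exprM -signr_odd oddX hodd orbT expr1.
Qed.

Lemma S_succ N y :
  S N.+1 y = \sum_(0 <= j < p) (-1) ^+ j * S N (y + (j * p ^ N)%:R).
Proof.
rewrite /S expnSr sum_split; apply: eq_big_nat => j _.
rewrite mulr_sumr; apply: eq_big_nat => b _.
rewrite natrD addrA exprD sign_pN; ring.
Qed.

Lemma L2 N y : S N.+1 y - S N y =
  \sum_(0 <= j < p) (-1) ^+ j * (S N (y + (j * p ^ N)%:R) - S N y).
Proof.
rewrite S_succ; under [RHS]eq_bigr do rewrite mulrBr.
rewrite sumrB -mulr_suml sum_sign hodd mul1r //.
Qed.

Lemma step_est N y : (1 <= N)%N -> inY y -> v (S N.+1 y - S N y) <= C * eps N.
Proof.
move=> N1 hy; rewrite L2.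
have hC0 : 0 <= C * eps N by apply: mulr_ge0; [have := C_ge1; lra|exact: eps_ge0].
apply: vsum_le_mem => // j _.
rewrite (vM hv) (vsign hv) mul1r; apply: L1 => //.
rewrite natrM (vM hv) v_pN; have := vnat_le1 hv j; have := eps_ge0 N; have := v_ge0 hv j%:R; nra.
Qed.

Lemma cauchy_est N m y : (1 <= N)%N -> (N <= m)%N -> inY y -> v (S m y - S N y) <= C * eps N.
Proof.
move=> N1 Nm hy; elim: m Nm => [|m IH] Nm.
  by move: N1; rewrite leqn0 in Nm; rewrite (eqP Nm).
have hC0 : 0 <= C * eps N by apply: mulr_ge0; [have := C_ge1; lra|exact: eps_ge0].
rewrite leq_eqVlt in Nm; case/orP: Nm => [/eqP <-|Nm]; first by rewrite subrr (v0 hv).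
have -> : S m.+1 y - S N y = (S m.+1 y - S m y) + (S m y - S N y) by ring.
apply: (vD_le hv); last exact: IH.
apply: le_trans (step_est _ _) _ => //; first exact: leq_trans N1 Nm.
apply: ler_wpM2l; first by have := C_ge1; lra.
exact: eps_mono.
Qed.

Lemma eps_N N : eps N * N%:R <= 1.
Proof.
have p3 : (3 : R) <= p%:R by have := p_ge3; rewrite -(ler_nat R).
have := rn_bound N pR_gt1.
have : (p%:R - 1 : R)^-1 <= 1 by rewrite invf_le1; lra.
rewrite /eps; lra.
Qed.

Lemma ev_small e : 0 < e -> exists N0, forall n, (N0 <= n)%N -> (1 <= n)%N /\ C * eps n < e.
Proof.
move=> e0.
have hC1 := C_ge1.
have b0 : 0 <= C / e by apply: divr_ge0; lra.
have hb := archi_boundP b0.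
set B := Num.bound (C / e) in hb.
exists B.+1 => n hn; split; first exact: leq_trans hn.
have hn' : (B.+1)%:R <= n%:R :> R by rewrite ler_nat.
move: hb; rewrite ltr_pdivrMr // => hb.
have := eps_N n; have := eps_ge0 n.
rewrite -natr1 in hn'.
have : 0 <= (B%:R : R) by [].
nra.
Qed.

Lemma S_cvg y : inY y -> cvgK v (fun N => S N y) (limK v (fun N => S N y)).
Proof.
move=> hy.
have [l hl] : exists l, cvgK v (fun N => S N y) l.
  case: hC => _ [_ [_ [hcomp _]]]; apply: hcomp => e e0.
  have [N0 hN0] := ev_small e0.
  exists N0 => m n hm hn.
  have [N1 hN] := hN0 N0 (leqnn _).
  have -> : S m y - S n y = (S m y - S N0 y) - (S n y - S N0 y) by ring.
  apply: le_lt_trans hN; apply: (vB_le hv); exact: cauchy_est.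
by rewrite (limK_eq hv hl).
Qed.

Lemma tel_gen (g : nat -> K) M :
  \sum_(0 <= a < M) (g a.+1 + g a) * (-1) ^+ a = g 0%N - (-1) ^+ M * g M.
Proof.
elim: M => [|M IH]; first by rewrite big_geq // expr0 mul1r subrr.
rewrite big_nat_recr //= IH exprS; ring.
Qed.

Lemma sign_odd_pN N : (-1) ^+ (p ^ N) = - 1 :> K.
Proof. by rewrite -signr_odd oddX hodd orbT expr1. Qed.

Lemma S_tel N y : S N (1 + y) + S N y = f y + f (y + (p ^ N)%:R).
Proof.
rewrite /S -big_split /=.
have := tel_gen (fun a => f (y + a%:R)) (p ^ N); rewrite /= addr0 sign_odd_pN.
rewrite mulN1r opprK => <-.
apply: eq_big_nat => a _; rewrite -mulrDl -nat1r addrA [1 + y]addrC /f !addrA; ring.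
Qed.

Lemma f_odd w : f (- w) = - f w.
Proof. rewrite /f lg_opp; ring. Qed.

Lemma S_refl N y : S N (1 - y) = - S N (y - (p ^ N)%:R).
Proof.
rewrite /S big_nat_rev /= -sumrN; apply: eq_big_nat => a /andP[_ ha].
rewrite add0n natrB //.
have -> : (-1) ^+ (p ^ N - a.+1)%N = (-1) ^+ a :> K.
  by rewrite -signr_odd oddB // oddX hodd orbT /= negbK signr_odd.
rewrite -(nat1r a).
have -> : 1 - y + ((p ^ N)%:R - (1 + a%:R)) = - (y - (p ^ N)%:R + a%:R) by ring.
by rewrite f_odd mulNr.
Qed.

Lemma GpE_G y : GpE v p lg y = limK v (fun N => S N y).
Proof. by []. Qed.

Lemma cvg_const (c : K) : cvgK v (fun _ => c) c.
Proof. by move=> e e0; exists 0%N => n _; rewrite subrr (v0 hv). Qed.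

Lemma inY_x : inY x. Proof. by left; rewrite subrr (v0 hv). Qed.
Lemma inY_1x : inY (1 + x). Proof. by left; rewrite addrK (v1 hv). Qed.
Lemma inY_Nx : inY (- x). Proof. by right; rewrite addNr (v0 hv). Qed.
Lemma inY_1Nx : inY (1 - x). Proof. by right; rewrite subrK (v1 hv). Qed.
Lemma inY_subM y N : inY y -> inY (y - (p ^ N)%:R).
Proof.
move=> hy; apply: inY_add => //; rewrite (vN hv) v_pN.
apply: exprn_ile1; [exact: pinv_ge0 | have := pinv_le; lra].
Qed.

Lemma refl_lim y : inY y ->
  limK v (fun N => S N (1 - y)) = - limK v (fun N => S N y).
Proof.
move=> hy.
have hy' : inY (1 - y).
  case: hy => h; [right|left].
    have -> : 1 - y + x = 1 - (y - x) by ring.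
    by apply: (vB_le hv) => //; rewrite (v1 hv).
  have -> : 1 - y - x = 1 - (y + x) by ring.
  by apply: (vB_le hv) => //; rewrite (v1 hv).
apply: (cvg_uniq hv (S_cvg hy')).
apply: (cvg_close hv (cvgN hv (S_cvg hy))) => e e0.
have [N0 hN0] := ev_small e0; exists N0 => n hn.
have [n1 hlt] := hN0 n hn.
rewrite S_refl opprK addrC.
apply: le_lt_trans hlt.
have := @L1 n (y - (p ^ n)%:R) (p ^ n)%:R n1 (inY_subM n hy).
by rewrite v_pN subrK => /(_ (le_refl _)).
Qed.

Lemma part3 : limK v (fun N => S N (1 + x)) + limK v (fun N => S N x) = f x + f x.
Proof.
apply: (cvg_uniq hv (cvgD hv (S_cvg inY_1x) (S_cvg inY_x))).
apply: (cvg_close hv (cvg_const (f x + f x))) => e e0.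
have [N0 hN0] := ev_small e0; exists N0 => n hn.
have [n1 hlt] := hN0 n hn.
rewrite S_tel; apply: le_lt_trans hlt.
have -> : f x + f (x + (p ^ n)%:R) - (f x + f x) = f (x + (p ^ n)%:R) - f x by ring.
by apply: term_est => //; [exact: inY_x | rewrite v_pN].
Qed.
End Padic.

Lemma final_alg (K : comNzRingType) (G1x Gx G1mx Gmx xx l : K) :
  G1x + Gx = (xx * l - xx) + (xx * l - xx) -> G1mx = - Gx -> Gmx = - G1x ->
  [/\ G1mx + Gx = 0, Gx - Gmx = 2 * xx * (l - 1) & G1x + Gx = 2 * xx * (l - 1)].
Proof.
move=> h3 h1 h2; split.
- by rewrite h1 addNr.
- rewrite h2 opprK addrC h3; ring.
- rewrite h3; ring.
Qed.

Theorem proposition4p1 (p : nat) (R : realType) (K : closedFieldType)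
  (v : K -> R) (lg : K -> K) :
  prime p -> odd p -> is_Cp v p -> iwasawa_log v p lg ->
  forall x : K, 1 < v x ->
    [/\ GpE v p lg (1 - x) + GpE v p lg x = 0,
        GpE v p lg x - GpE v p lg (- x) = 2 * x * (lg x - 1)
      & GpE v p lg (1 + x) + GpE v p lg x = 2 * x * (lg x - 1)].
Proof.
move=> hp hodd hC hlg x hx.
rewrite !GpE_G.
have h3 := part3 hp hodd hC hlg hx.
have hr1 := refl_lim hp hodd hC hlg hx (inY_x hC x).
have hr2 := refl_lim hp hodd hC hlg hx (inY_1x hC x).
have e : 1 - (1 + x) = - x by ring.
rewrite e in hr2.
exact: final_alg h3 hr1 hr2.
Qed.
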